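(* Let $R$ be a commutative ring with unity. Every element of $X(R)$ can be written as $\sum_{n=0}^\infty V^n\langle a_n\rangle$ for some $a_n\in R$ (the series converging in the product topology of $R^{\mathbb N_0}$).
   Context: Fix a prime $p$. $R^{\mathbb N_0}$ has the product topology; $V(r_0,r_1,\dots)=p(0,r_0,r_1,\dots)$; $\langle r\rangle=(r,r^p,r^{p^2},\dots)$; $X(R)$ is the closed subgroup of $R^{\mathbb N_0}$ generated by $\{V^n\langle r\rangle\mid n\in\mathbb N_0,r\in R\}$. *)

(* Defs.v *)
(* Sequences in R^{N_0} are functions nat -> R; R carries the
   discrete topology and R^{N_0} the product topology, which we unfold
   explicitly. *)
From mathcomp Require Import all_boot all_order all_algebra.
Set Implicit Arguments. Unset Strict Implicit. Unset Printing Implicit Defensive.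
Import GRing.Theory.
Local Open Scope ring_scope.

Section WittX.
Variables (p : nat) (R : comPzRingType).

Definition Vop (r : nat -> R) : nat -> R :=
  fun i => if i is j.+1 then p%:R * r j else 0.

Definition teich (r : R) : nat -> R := fun i => r ^+ (p ^ i)%N.

(* closed sets of R^{N_0} in the product topology (R discrete):
   S contains every point of its closure. *)
Definition prod_closed (S : (nat -> R) -> Prop) : Prop :=
  forall x : nat -> R,
    (forall N : nat, exists2 s, S s & forall i, (i < N)%N -> s i = x i) -> S x.

Definition add_subgroup (S : (nat -> R) -> Prop) : Prop :=
  S (fun _ => 0) /\ forall x y, S x -> S y -> S (fun i => x i - y i).

(* X(R): the closed subgroup generated by { V^n <r> }, i.e. the intersection
   of all closed subgroups containing these elements. *)
Definition X (x : nat -> R) : Prop :=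
  forall S : (nat -> R) -> Prop,
    add_subgroup S -> prod_closed S ->
    (forall (n : nat) (r : R), S (iter n Vop (teich r))) -> S x.

Definition prod_cvg (u : nat -> nat -> R) (x : nat -> R) : Prop :=
  forall i : nat, exists N0 : nat, forall N, (N0 <= N)%N -> u N i = x i.

Definition series_to (f : nat -> nat -> R) (x : nat -> R) : Prop :=
  prod_cvg (fun N i => \sum_(n < N) f n i) x.

End WittX.

(* Main.v *)
Require Import Defs.
From HB Require Import structures.
From mathcomp Require Import all_boot all_order all_algebra.
From mathcomp Require Import mpoly ring.
From Stdlib Require Import ClassicalEpsilon.
Require Import Defs.
Set Implicit Arguments. Unset Strict Implicit. Unset Printing Implicit Defensive.
Import GRing.Theory.
Local Open Scope ring_scope.

Definition ghost (A : comPzRingType) (p : nat) (u : nat -> A) (i : nat) : A :=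
  \sum_(n < i.+1) (p%:R : A) ^+ n * u n ^+ (p ^ (i - n)).
Definition ghh (A : comPzRingType) (p : nat) (u : nat -> A) (i : nat) : A :=
  \sum_(n < i) (p%:R : A) ^+ n * u n ^+ (p ^ (i - n)).
Definition dv (A : comPzRingType) (p k : nat) (f : A) := exists h, f = (p%:R : A) ^+ k * h.

Lemma ghostE (A : comPzRingType) p (u : nat -> A) i :
  ghost p u i = ghh p u i + (p%:R : A) ^+ i * u i.
Proof. by rewrite /ghost /ghh big_ord_recr /= subnn expn0 expr1. Qed.

Lemma ghost_ext (A : comPzRingType) p (u v : nat -> A) i :
  (forall n, (n <= i)%N -> u n = v n) -> ghost p u i = ghost p v i.
Proof. by move=> h; apply: eq_bigr => -[n /= hn] _; rewrite h. Qed.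

Lemma ghh_ext (A : comPzRingType) p (u v : nat -> A) i :
  (forall n, (n < i)%N -> u n = v n) -> ghh p u i = ghh p v i.
Proof. by move=> h; apply: eq_bigr => -[n /= hn] _; rewrite h. Qed.

Lemma ghost_morph (A B : comPzRingType) (f : {rmorphism A -> B}) p (u : nat -> A) i :
  f (ghost p u i) = ghost p (fun n => f (u n)) i.
Proof.
rewrite /ghost rmorph_sum; apply: eq_bigr => n _.
by rewrite rmorphM rmorphXn rmorph_nat rmorphXn.
Qed.


Lemma dv0 (A : comPzRingType) p k : dv p k (0 : A).
Proof. by exists 0; rewrite mulr0. Qed.
Lemma dvD (A : comPzRingType) p k (f g : A) : dv p k f -> dv p k g -> dv p k (f + g).
Proof. by move=> [h ->] [h' ->]; exists (h + h'); rewrite mulrDr. Qed.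
Lemma dvN (A : comPzRingType) p k (f : A) : dv p k f -> dv p k (- f).
Proof. by move=> [h ->]; exists (- h); rewrite mulrN. Qed.
Lemma dvB (A : comPzRingType) p k (f g : A) : dv p k f -> dv p k g -> dv p k (f - g).
Proof. by move=> hf hg; apply: dvD => //; apply: dvN. Qed.
Lemma dvMl (A : comPzRingType) p k (f g : A) : dv p k f -> dv p k (g * f).
Proof. by move=> [h ->]; exists (g * h); rewrite mulrCA. Qed.
Lemma dvMr (A : comPzRingType) p k (f g : A) : dv p k f -> dv p k (f * g).
Proof. by move=> hf; rewrite mulrC; apply: dvMl. Qed.
Lemma dvP (A : comPzRingType) p j k (f : A) : dv p k f -> dv p (j + k) ((p%:R : A) ^+ j * f).
Proof. by move=> [h ->]; exists h; rewrite exprD mulrA. Qed.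
Lemma dvW (A : comPzRingType) p j k (f : A) : (j <= k)%N -> dv p k f -> dv p j f.
Proof.
move=> hjk [h ->]; exists ((p%:R : A) ^+ (k - j) * h).
by rewrite mulrA -exprD subnKC.
Qed.
Lemma dv_sum (A : comPzRingType) p k m (F : 'I_m -> A) :
  (forall i, dv p k (F i)) -> dv p k (\sum_(i < m) F i).
Proof.
move=> h; elim/big_ind: _ => //; [exact: dv0 | exact: dvD].
Qed.
Lemma dvXX (A : comPzRingType) p k m (f g : A) : dv p k (f - g) -> dv p k (f ^+ m - g ^+ m).
Proof. by move=> h; rewrite subrXX; apply: dvMr. Qed.

Lemma dvK (A : comPzRingType) p k (f g : A) : (0 < p)%N ->
  dv p 1 (f - g) -> dv p k.+1 (f ^+ (p ^ k) - g ^+ (p ^ k)).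
Proof.
move=> p0 h1; elim: k => [|k IH]; first by rewrite expn0 !expr1.
rewrite expnSr !exprM.
set F := f ^+ (p ^ k); set G := g ^+ (p ^ k).
rewrite subrXX.
have hs : dv p 1 (\sum_(i < p) F ^+ (p.-1 - i) * G ^+ i).
  have E : G ^+ p.-1 *+ p = \sum_(i < p) G ^+ p.-1 by rewrite sumr_const card_ord.
  have -> : \sum_(i < p) F ^+ (p.-1 - i) * G ^+ i =
     \sum_(i < p) (F ^+ (p.-1 - i) - G ^+ (p.-1 - i)) * G ^+ i + G ^+ p.-1 *+ p.
    rewrite E -big_split /=.
    apply: eq_bigr => i _.
    have hi : (i <= p.-1)%N by rewrite -ltnS prednK // ltn_ord.
    by rewrite mulrBl -exprD subnK // subrK.
  apply: dvD.
    apply: dv_sum => i; apply: dvMr; apply: dvXX.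
    by apply: (dvW (k := k.+1)).
  by exists (G ^+ p.-1); rewrite expr1 mulr_natl.
case: IH => h ->; case: hs => h' ->.
by exists (h * h'); rewrite expr1 [in RHS]exprSr -!mulrA; congr (_ * _); rewrite mulrCA.
Qed.

Lemma frobK (A : comPzRingType) p (phi : {rmorphism A -> A})
  (hphi : forall f, dv p 1 (phi f - f ^+ p)) (p0 : (0 < p)%N) f k :
  dv p k.+1 (f ^+ (p ^ k.+1) - phi f ^+ (p ^ k)).
Proof.
rewrite expnS exprM; apply: dvK => //.
by rewrite -opprB; apply: dvN.
Qed.

Lemma ghh_cong (A : comPzRingType) p (phi : {rmorphism A -> A})
  (hphi : forall f, dv p 1 (phi f - f ^+ p)) (p0 : (0 < p)%N) (u : nat -> A) i :
  dv p i.+1 (ghh p u i.+1 - phi (ghost p u i)).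
Proof.
rewrite ghost_morph /ghh /ghost -sumrB; apply: dv_sum => -[n /= hn].
have hni : (n <= i)%N by [].
rewrite -mulrBr subSn // -[in X in dv _ X _](subnKC hni) -addnS.
by apply: dvP; apply: frobK.
Qed.

Lemma ghost_cong (A : comPzRingType) p (phi : {rmorphism A -> A})
  (hphi : forall f, dv p 1 (phi f - f ^+ p)) (p0 : (0 < p)%N) (u : nat -> A) i :
  dv p i.+1 (ghost p u i.+1 - phi (ghost p u i)).
Proof.
rewrite ghostE addrAC; apply: dvD; first exact: ghh_cong.
by exists (u i.+1).
Qed.

Lemma dwork (A : comPzRingType) p (phi : {rmorphism A -> A})
  (hphi : forall f, dv p 1 (phi f - f ^+ p)) (p0 : (0 < p)%N) (y : nat -> A) :
  (forall i, dv p i.+1 (y i.+1 - phi (y i))) ->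
  forall M, exists c, forall i, (i < M)%N -> ghost p c i = y i.
Proof.
move=> hy; elim=> [|M [c hc]]; first by exists (fun _ => 0).
have [h hh] : dv p M (y M - ghh p c M).
  case: M hc => [|M] hc; first by exists (y 0 - ghh p c 0); rewrite expr0 mul1r.
  have -> : y M.+1 - ghh p c M.+1 =
      (y M.+1 - phi (y M)) - (ghh p c M.+1 - phi (ghost p c M)).
    by rewrite hc // opprB addrA subrK.
  by apply: dvB => //; apply: ghh_cong.
exists (fun j => if j == M then h else c j) => i; rewrite ltnS leq_eqVlt.
case/orP=> [/eqP ->|hi].
  rewrite ghostE eqxx -hh (@ghh_ext _ p _ c) => [|n hn].
    by rewrite addrC subrK.
  by rewrite (ltn_eqF hn).
rewrite -hc // ; apply: ghost_ext => n hn.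
by rewrite (ltn_eqF (leq_ltn_trans hn hi)).
Qed.

Lemma binom_dv (A : comPzRingType) p (hp : prime p) (u v : A) :
  dv p 1 ((u + v) ^+ p - u ^+ p - v ^+ p).
Proof.
have p0 := prime_gt0 hp.
case: p hp p0 => [//|q] hp _.
rewrite exprDn big_ord_recr big_ord_recl /= !subnn !subn0 !expr0 mulr1 mul1r !bin0 binn !mulr1n.
set S := \sum_(i < q) _.
rewrite [u ^+ _ + S]addrC addrAC addrK addrK.
apply: dv_sum => i.
have hi : (0 < (bump 0 i) < q.+1)%N.
  by rewrite /bump /= add1n ltnS ltn_ord.
have /dvdnP [m hm] := prime_dvd_bin hp hi.
exists (u ^+ (q.+1 - bump 0 i) * v ^+ bump 0 i *+ m).
by rewrite hm mulrnA expr1 mulr_natl.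
Qed.

Lemma idD (A : comNzRingType) (a b c d e : A) : a + b - e = (a - c) + (b - d) - (e - c - d).
Proof. by ring. Qed.
Lemma idB (A : comNzRingType) (a b c d e : A) : a - b - e = (a - c) - (b - d) + (c - e - d).
Proof. by ring. Qed.
Lemma idS (A : comNzRingType) (a b c d : A) : a - b - (c - d) = (a - c) - (b - d).
Proof. by ring. Qed.

Definition frob (k p : nat) : {rmorphism {mpoly int[k]} -> {mpoly int[k]}} := mmap (@mpolyC k int) (fun i => 'X_i ^+ p).

Lemma frobX k p i : @frob k p 'X_i = 'X_i ^+ p.
Proof. by rewrite /frob /= mmapX mmap1U. Qed.

Lemma mpoly_scaleE k c (q : {mpoly int[k]}) : c *: q = c%:~R * q.
Proof. by rewrite -mul_mpolyC -[in LHS](intz c) rmorph_int. Qed.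

Lemma frob_lift k p (hp : prime p) (F : {mpoly int[k]}) :
  dv p 1 (@frob k p F - F ^+ p).
Proof.
pose Q (f : {mpoly int[k]}) := dv p 1 (@frob k p f - f ^+ p).
have QD f g : Q f -> Q g -> Q (f + g).
  move=> hf hg; rewrite /Q rmorphD.
  rewrite (idD _ _ (f ^+ p) (g ^+ p)).
  by apply: dvB; [apply: dvD|apply: binom_dv].
have QB f g : Q f -> Q g -> Q (f - g).
  move=> hf hg; rewrite /Q rmorphB.
  rewrite (idB _ _ (f ^+ p) (g ^+ p)).
  have := binom_dv hp (f - g) g; rewrite subrK => hb.
  by apply: dvD; [apply: dvB|exact: hb].
have QM f g : Q f -> Q g -> Q (f * g).
  move=> hf hg; rewrite /Q rmorphM.
  have -> : frob k p f * frob k p g - (f * g) ^+ p =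
     (frob k p f - f ^+ p) * frob k p g + f ^+ p * (frob k p g - g ^+ p).
    by rewrite exprMn mulrBl mulrBr addrA subrK.
  by apply: dvD; [apply: dvMr|apply: dvMl].
have Q1 : Q 1 by rewrite /Q rmorph1 expr1n subrr; apply: dv0.
have Q0 : Q 0 by rewrite -(subrr 1); apply: QB.
have Qn n : Q n%:R by elim: n => [|n IH]; [exact: Q0 | rewrite mulrS; apply: QD].
have Qz (c : int) : Q c%:~R.
  case: c => n; first exact: Qn.
  by rewrite NegzE mulrNz -sub0r; apply: QB; [exact: Q0 | exact: (Qn n.+1)].
have QX i : Q 'X_i by rewrite /Q frobX subrr; apply: dv0.
have QXn i n : Q ('X_i ^+ n).
  by elim: n => [|n IH]; [rewrite expr0 | rewrite exprS; apply: QM].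
elim/mpolyind: F => [|c m q _ _ hq]; first exact: Q0.
apply: (QD) => //; rewrite mpoly_scaleE; apply: (QM) => //.
rewrite mpolyXE_id; apply: (big_ind Q) => //; exact: QM.
Qed.

Definition nzw (R : comPzRingType) (H : (1:R) != 0) : Type := R.
HB.instance Definition _ R H := GRing.ComPzRing.on (@nzw R H).
HB.instance Definition _ R H := GRing.PzSemiRing_isNonZero.Build (@nzw R H) H.

Lemma triv (R : comPzRingType) : (1:R) = 0 -> forall x : R, x = 0.
Proof. by move=> h x; rewrite -[x]mul1r h mul0r. Qed.

Lemma sub_trunc p (hp : prime p) (R : comPzRingType) (a b : nat -> R) N :
  exists c, forall i, (i < N)%N -> ghost p c i = ghost p a i - ghost p b i.
Proof.
case: (eqVneq (1:R) 0) => [h1|H].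
  have t := triv h1.
  by exists (fun _ => 0) => i _; rewrite (t (ghost p _ i)) (t (ghost p a i - _)).
pose k := (N + N).+1.
pose xa n : {mpoly int[k]} := 'X_(inord n).
pose xb n : {mpoly int[k]} := 'X_(inord (N + n)).
pose y i := ghost p xa i - ghost p xb i.
have hy : forall i, dv p i.+1 (y i.+1 - frob k p (y i)).
  move=> i; rewrite /y rmorphB.
  rewrite idS.
  apply: dvB; apply: ghost_cong => //; [exact: frob_lift | exact: prime_gt0 | exact: frob_lift | exact: prime_gt0].
have [c hc] := dwork (frob_lift hp) (prime_gt0 hp) hy N.
pose h (j : 'I_k) : nzw H := if (j < N)%N then a j else b (j - N)%N.
pose ev : {rmorphism {mpoly int[k]} -> nzw H} := mmap (intr : int -> nzw H) h.
pose c' := (fun n => ev (c n)).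
have T1 : forall i, (i < N)%N -> ghost p c' i = ghost p (a : nat -> nzw H) i - ghost p (b : nat -> nzw H) i.
  move=> i hi.
  apply: etrans (esym (ghost_morph ev p c i)) _.
  rewrite (hc i hi) /y.
  apply: etrans (rmorphB ev _ _) _.
  congr (_ - _).
    apply: etrans (ghost_morph ev p xa i) _.
    apply: ghost_ext => n hn.
    have hnN : (n < N)%N by apply: leq_ltn_trans hn hi.
    have hnk : (n < k)%N by rewrite /k ltnS (leq_trans (ltnW hnN)) // leq_addr.
    rewrite /ev /xa /= mmapX mmap1U /h inordK // hnN.
    done.
  apply: etrans (ghost_morph ev p xb i) _.
  apply: ghost_ext => n hn.
  have hnN : (n < N)%N by apply: leq_ltn_trans hn hi.
  have hnk : (N + n < k)%N by rewrite /k ltnS leq_add2l ltnW.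
  rewrite /ev /xb /= mmapX mmap1U /h inordK // ltnNge leq_addr /= addKn.
  done.
exists c'.
exact: T1.
Qed.

Lemma powP (R : comPzRingType) p n (a b : R) m :
  (p%:R : R) ^+ n * a = (p%:R) ^+ n * b -> (p%:R : R) ^+ n * a ^+ m = (p%:R) ^+ n * b ^+ m.
Proof.
move=> h; apply/eqP; rewrite -subr_eq0 -mulrBr subrXX mulrA mulrBr h subrr mul0r //.
Qed.

Lemma uniq_ghost (R : comPzRingType) p N (a b : nat -> R) :
  (forall i, (i < N)%N -> ghost p a i = ghost p b i) ->
  forall n, (n < N)%N -> (p%:R : R) ^+ n * a n = (p%:R) ^+ n * b n.
Proof.
elim: N => [//|N IH] h n.
have IH' := IH (fun i hi => h i (ltnW hi)).
rewrite ltnS leq_eqVlt => /orP [/eqP ->|hn]; last exact: IH'.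
have := h N (ltnSn N); rewrite !ghostE.
have -> : ghh p a N = ghh p b N.
  by apply: eq_bigr => -[m /= hm] _; apply: powP; apply: IH'.
by move/addrI.
Qed.

Lemma closure (R : comPzRingType) p (x : nat -> R) :
  (forall N, exists a, forall i, (i < N)%N -> x i = ghost p a i) ->
  exists a, forall i, x i = ghost p a i.
Proof.
move=> hN.
have [b hb] : exists b : nat -> nat -> R, forall n i, (i < n.+1)%N -> x i = ghost p (b n) i.
  exists (fun n => proj1_sig (constructive_indefinite_description _ (hN n.+1))).
  move=> n; exact: (proj2_sig (constructive_indefinite_description _ (hN n.+1))).
exists (fun n => b n n) => i.
rewrite (hb i i (ltnSn i)); apply: eq_bigr => -[n /= hn] _.
apply: powP; apply: (@uniq_ghost _ p n.+1) => // j hj.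
by rewrite -(hb i j (leq_trans hj hn)) -(hb n j hj).
Qed.

Lemma iterV (R : comPzRingType) p (f : nat -> R) n i :
  iter n (@Vop p R) f i = if (n <= i)%N then (p%:R : R) ^+ n * f (i - n)%N else 0.
Proof.
elim: n i => [|n IH] i /=; first by rewrite expr0 mul1r subn0.
case: i => [|j] //=.
rewrite IH subSS ltnS; case: (n <= j)%N; last by rewrite mulr0.
by rewrite exprS mulrA.
Qed.

Lemma zpow (R : comPzRingType) p k : (0 < p)%N -> (0 : R) ^+ (p ^ k) = 0.
Proof. by move=> p0; rewrite expr0n expn_eq0 eqn0Ngt p0. Qed.

Lemma ghost0 (R : comPzRingType) p i : (0 < p)%N -> ghost p (fun _ => 0 : R) i = 0.
Proof. by move=> p0; apply: big1 => j _; rewrite zpow // mulr0. Qed.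

Lemma ghost_gen (R : comPzRingType) p (p0 : (0 < p)%N) n (r : R) i :
  iter n (@Vop p R) (@teich p R r) i = ghost p (fun m => if m == n then r else 0) i.
Proof.
rewrite iterV /ghost; case: leqP => h.
  have h' : (n < i.+1)%N by [].
  rewrite (bigD1 (Ordinal h')) //= eqxx big1 ?addr0 // => j hj.
  have : (j : nat) != n.
    by apply: contra hj => /eqP e; apply/eqP; apply: val_inj.
  by move/negbTE => ->; rewrite zpow // mulr0.
apply/esym/big1 => j _.
have hj : (j < n)%N by apply: leq_ltn_trans h; rewrite -ltnS.
by rewrite (ltn_eqF hj) zpow // mulr0.
Qed.

Lemma sum_ghost (R : comPzRingType) p (a : nat -> R) N i : (i < N)%N ->
  \sum_(n < N) iter n (@Vop p R) (@teich p R (a n)) i = ghost p a i.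
Proof.
move=> hi.
rewrite (eq_bigr (fun n : 'I_N => if (n <= i)%N then (p%:R : R) ^+ n * a n ^+ (p ^ (i - n)) else 0));
  last by move=> n _; rewrite iterV.
rewrite -big_mkcond /= /ghost (big_ord_widen N (fun j => (p%:R : R) ^+ j * a j ^+ (p ^ (i - j)))) //.
Qed.

Theorem lemma2p6 (p : nat) (hp : prime p) (R : comPzRingType) (x : nat -> R) :
  @X p R x ->
  exists a : nat -> R, @series_to R (fun n => iter n (@Vop p R) (@teich p R (a n))) x.
Proof.
move=> hX.
have p0 := prime_gt0 hp.
pose S := fun x : nat -> R => exists a, forall i, x i = ghost p a i.
have Sx : S x.
  apply: hX.
  - split; first by exists (fun _ => 0) => i; rewrite ghost0.
    move=> y z [a ha] [b hb]; apply: closure => N.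
    have [c hc] := sub_trunc hp a b N.
    by exists c => i hi; rewrite ha hb hc.
  - move=> y hy; apply: closure => N.
    have [s [a ha] hs] := hy N.
    by exists a => i hi; rewrite -hs // ha.
  - move=> n r; exists (fun m => if m == n then r else 0) => i.
    exact: ghost_gen.
case: Sx => a ha; exists a => i; exists i.+1 => M hM /=.
by rewrite sum_ghost // ha.
Qed.
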